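(* Let $q$ be a power of an odd prime, $c\in\mathbb{F}_q^*$, $b\in\mathbb{F}_q$ a nonsquare, $\beta\in\mathbb{F}_{q^2}$ with $\beta^2=b$, and $f(X)=c(X^{q+1}+X^2)$ on $\mathbb{F}_{q^2}$. If $\alpha\in\mathbb{F}_{q^2}\setminus\beta\mathbb{F}_q$, where $\beta\mathbb{F}_q=\{y\beta:y\in\mathbb{F}_q\}$, then the number of $\gamma\in\mathbb{F}_{q^2}$ with $f(\gamma)=\alpha$ is either $0$ or $2$. *)

(* Defs.v *)
From mathcomp Require Import all_boot all_order all_algebra all_field.
Set Implicit Arguments. Unset Strict Implicit. Unset Printing Implicit Defensive.
Import GRing.Theory.
Local Open Scope ring_scope.

(* L plays the role of F_{q^2} (a finite field with q^2 elements);
   F_q is the subfield of fixed points of the Frobenius x |-> x^q. *)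
Definition inFq (q : nat) (L : finFieldType) (x : L) : bool := x ^+ q == x.

Definition fmap (q : nat) (L : finFieldType) (c x : L) : L :=
  c * (x ^+ q.+1 + x ^+ 2).

(* Main.v *)
Require Import Defs.
From mathcomp Require Import all_boot all_order all_algebra all_field.
From mathcomp Require Import ring.
Import GRing.Theory.
Local Open Scope ring_scope.

Theorem lemma18 (L : finFieldType) (p k q : nat)
  (hp : prime p) (hodd : odd p) (hk : (0 < k)%N) (hq : q = (p ^ k)%N)
  (hL : #|L| = (q ^ 2)%N)
  (c b beta alpha : L)
  (hc : c != 0) (hcq : inFq q c)
  (hbq : inFq q b) (hbns : forall y : L, inFq q y -> y ^+ 2 != b)
  (hbeta : beta ^+ 2 = b)
  (halpha : forall y : L, inFq q y -> alpha != y * beta) :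
  #|[set g : L | fmap q c g == alpha]| = 0%N \/
  #|[set g : L | fmap q c g == alpha]| = 2%N.
Proof.
have q0 : (0 < q)%N by rewrite hq expn_gt0 prime_gt0.
have pc : p \in [pchar L].
  apply: (@card_finPcharP _ p (k * 2)%N) => //.
  by rewrite hL hq expnM.
have frobD : forall x y : L, (x + y) ^+ q = x ^+ q + y ^+ q.
  move=> x y; apply: exprDn_pchar.
  by rewrite (eq_pnat _ (pcharf_eq pc)) hq pnatX pnat_id.
have qq : forall x : L, (x ^+ q) ^+ q = x.
  by move=> x; rewrite -exprM mulnn -hL expf_card.
have two0 : (2 : L) != 0.
  apply/negP => /eqP h2.
  have : (p %| 2)%N by rewrite (dvdn_pcharf pc) h2.
  rewrite dvdn_prime2 //; move/eqP => hp2.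
  by move: hodd; rewrite hp2.
have alpha0 : alpha != 0.
  have := halpha 0; rewrite mul0r; apply.
  by rewrite /inFq expr0n eqn0Ngt q0.
pose T (x : L) := x + x ^+ q.
have TF : forall x : L, (T x) ^+ q = T x by move=> x; rewrite /T frobD qq addrC.
have fE : forall g : L, fmap q c g = c * g * T g.
  by move=> g; rewrite /fmap /T exprS expr2; ring.
have frobN : forall x : L, (- x) ^+ q = - x ^+ q.
  move=> x; apply/eqP; rewrite -addr_eq0 -frobD addNr expr0n.
  by rewrite eqn0Ngt q0.
have key : forall g1 g2 : L, fmap q c g1 = alpha -> fmap q c g2 = alpha ->
    g2 = g1 \/ g2 = - g1.
  move=> g1 g2; rewrite !fE => h1 h2.
  have T1 : T g1 != 0 by apply: contra_eq_neq h1 => ->; rewrite mulr0 eq_sym.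
  have T2 : T g2 != 0 by apply: contra_eq_neq h2 => ->; rewrite mulr0 eq_sym.
  pose t := T g1 / T g2.
  have tq : t ^+ q = t by rewrite /t exprMn exprVn !TF.
  have g2E : g2 = t * g1.
    apply: (mulIf T2); apply: (mulfI hc).
    rewrite /t; move: (h1); rewrite -h2 => e.
    by rewrite mulrA -e; field.
  have T2E : T g2 = t * T g1 by rewrite g2E /T exprMn tq mulrDr.
  have t1 : t ^+ 2 = 1.
    have e : c * g2 * T g2 = t ^+ 2 * (c * g1 * T g1) by rewrite T2E g2E; ring.
    by move: e; rewrite h1 h2 => e; apply: (mulIf alpha0); rewrite mul1r -e.
  have : (t - 1) * (t + 1) = 0 by rewrite -subr_sqr t1 expr1n subrr.
  move/eqP; rewrite mulf_eq0 => /orP [/eqP e | /eqP e].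
    by left; rewrite g2E; move/eqP: e; rewrite subr_eq0 => /eqP ->; rewrite mul1r.
  right; rewrite g2E; move/eqP: e; rewrite addr_eq0 => /eqP ->; by rewrite mulN1r.
case: (set_0Vmem [set g : L | fmap q c g == alpha]) => [-> | [g]].
  by left; rewrite cards0.
rewrite inE => /eqP hg.
right.
have fN : fmap q c (- g) = alpha.
  by rewrite fE /T frobN -hg fE /T; ring.
have -> : [set g0 : L | fmap q c g0 == alpha] = [set g; - g].
  apply/setP => x; rewrite !inE; apply/idP/idP.
    move/eqP => hx; case: (key g x hg hx) => ->; by rewrite eqxx ?orbT.
  by case/orP => /eqP ->; rewrite ?hg ?fN.
rewrite cards2.
suff : g != - g by move=> ->.
apply/negP => /eqP e.
have g0 : g != 0 by apply: contra_eq_neq hg => ->; rewrite fE mulr0 mul0r eq_sym.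
have : 2 * g = 0 by rewrite mulr2n mulrDl mul1r {1}e addNr.
by move/eqP; rewrite mulf_eq0 (negPf two0) (negPf g0).
Qed.
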